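(* Let $d\ge1$ and let $X_1,\dots,X_d$ be non-negative integrable random variables such that $\mathbb{P}(X_i>t,X_j>t)\le\mathbb{P}(X_i>t)\mathbb{P}(X_j>t)$ for all $i\neq j\in[d]$ and all $t>0$. Let $\tilde X_1,\dots,\tilde X_d$ be mutually independent with $\tilde X_i$ equal in distribution to $X_i$. Then $\mathbb{E}\max_{i\in[d]}X_i\ge\frac12\mathbb{E}\max_{i\in[d]}\tilde X_i$.
   Context: $[d]=\{1,\dots,d\}$. *)

(* Defs.v *)
From HB Require Import structures.
From mathcomp Require Import all_boot all_order all_algebra.
From mathcomp Require Import all_classical all_reals all_analysis.
Set Implicit Arguments. Unset Strict Implicit. Unset Printing Implicit Defensive.
Import Order.TTheory GRing.Theory Num.Theory.
Local Open Scope classical_set_scope.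
Local Open Scope ring_scope.

Definition mutually_independent (dT : measure_display) (T : measurableType dT)
  (R : realType) (P : probability T R) (n : nat) (Y : 'I_n -> T -> R) : Prop :=
  forall (S : {set 'I_n}) (B : 'I_n -> set R),
    (forall i, measurable (B i)) ->
    P (\bigcap_(i in [set i | i \in S]) (Y i @^-1` B i)) =
    (\prod_(i in S) P (Y i @^-1` B i))%E.

(* pointwise maximum of the family (the X_i are non-negative, so 0 is a
   harmless initial value; d >= 1 anyway) *)
Definition maxRV (T : Type) (R : realType) (n : nat) (X : 'I_n -> T -> R) : T -> R :=
  fun x => \big[Num.max/0]_(i < n) X i x.

(* Main.v *)
Require Import Defs.
Set Warnings "-all".
From HB Require Import structures.
From mathcomp Require Import all_boot all_order all_algebra.
From mathcomp Require Import all_classical all_reals all_analysis.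
From mathcomp Require Import measurable_realfun.
From mathcomp Require Import ring lra.
Set Implicit Arguments. Unset Strict Implicit.
Import Order.TTheory GRing.Theory Num.Theory.
Local Open Scope classical_set_scope.
Local Open Scope ring_scope.


Section unions.
Context (R : realType) (dT : measure_display) (T : measurableType dT)
  (P : probability T R) (n : nat) (A : 'I_n -> set T)
  (mA : forall i, measurable (A i)).

Let U := [set x | exists i, A i x].

Lemma mU : measurable U.
Proof.
have -> : U = \bigcup_(i in [set: 'I_n]) A i.
  by apply/seteqP; split => x [i]; [exists i|move=> _; exists i].
by apply: fin_bigcup_measurable => //; exact: finite_finset.
Qed.

Let mind (B : set T) : measurable B -> measurable_fun [set: T] (EFin \o (\1_B : T -> R)).
Proof. by move=> mB; apply/measurable_EFinP; exact: measurable_indic. Qed.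

Lemma union_le : (P U <= \sum_(i < n) P (A i))%E.
Proof.
rewrite -[U in P U]setIT -integral_indic //; last exact: mU.
have -> : (\sum_(i < n) P (A i) = \sum_(i < n) \int[P]_x (\1_(A i) x)%:E)%E.
  by apply: eq_bigr => i _; rewrite integral_indic // setIT.
rewrite -ge0_integral_sum //; last first.
  by move=> i; exact: mind.
apply: ge0_le_integral => //.
- exact: mind mU.
- by apply: emeasurable_sum => i; exact: mind.
move=> x _x; rewrite sumEFin lee_fin.
have [[i Ai]|nU] := pselect (U x).
  rewrite indicE mem_set; last by exists i.
  rewrite (bigD1 i) //= indicE mem_set // ler_wpDr //.
  by apply: sumr_ge0 => j _; rewrite indicE; case: (_ \in _).
rewrite indicE memNset //; apply: sumr_ge0 => j _.
by rewrite indicE; case: (_ \in _).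
Qed.


Lemma indic01 (B : set T) x : 0 <= (\1_B x : R) <= 1.
Proof. by rewrite indicE; case: (_ \in _) => /=; rewrite ?lexx ?ler01. Qed.

Lemma ind0 (B : set T) x : (0 <= (\1_B x : R)%:E)%E.
Proof. by rewrite lee_fin; case/andP: (indic01 B x). Qed.

Lemma union_ge (a : R) : 0 <= a ->
  ((2 * a)%:E * \sum_(i < n) P (A i) <=
   P U + (a ^+ 2)%:E * \sum_(i < n) \sum_(j < n) P (A i `&` A j))%E.
Proof.
move=> a0.
rewrite -[U in P U]setIT -integral_indic //; last exact: mU.
have -> : (\sum_(i < n) P (A i) = \sum_(i < n) \int[P]_x (\1_(A i) x)%:E)%E.
  by apply: eq_bigr => i _; rewrite integral_indic // setIT.
have -> : (\sum_(i < n) \sum_(j < n) P (A i `&` A j) =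
    \sum_(i < n) \sum_(j < n) \int[P]_x (\1_(A i `&` A j) x)%:E)%E.
  apply: eq_bigr => i _; apply: eq_bigr => j _.
  by rewrite integral_indic ?setIT //; exact: measurableI.
have mij i j : measurable (A i `&` A j) by exact: measurableI.
rewrite -ge0_integral_sum //; last by move=> i; exact: mind.
have -> : (\sum_(i < n) \sum_(j < n) \int[P]_x (\1_(A i `&` A j) x)%:E =
    \int[P]_x (\sum_(i < n) \sum_(j < n) (\1_(A i `&` A j) x)%:E))%E.
  rewrite ge0_integral_sum //; last first.
  - move=> i x _x; apply: sume_ge0 => j _; rewrite lee_fin; by case/andP: (indic01 (A i `&` A j) x).
  - by move=> i; apply: emeasurable_sum => j; exact: mind.
  apply: eq_bigr => i _; rewrite ge0_integral_sum //; last first.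
  by move=> j; exact: mind.
rewrite -ge0_integralZl_EFin //; last 3 first.
- by move=> x _x; apply: sume_ge0 => i _; exact: ind0.
- by apply: emeasurable_sum => i; exact: mind.
- by rewrite mulr_ge0.
rewrite -ge0_integralZl_EFin //; last 3 first.
- move=> x _x; apply: sume_ge0 => i _; apply: sume_ge0 => j _.
  by exact: ind0.
- by apply: emeasurable_sum => i; apply: emeasurable_sum => j; exact: mind.
- by rewrite exprn_ge0.
rewrite -ge0_integralD //; last 3 first.
- exact: mind mU.
- move=> x _x; apply: mule_ge0; first by rewrite lee_fin exprn_ge0.
  apply: sume_ge0 => i _; apply: sume_ge0 => j _.
  by exact: ind0.
- apply: measurable_funeM.
  by apply: emeasurable_sum => i; apply: emeasurable_sum => j; exact: mind.
apply: ge0_le_integral => //.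
- move=> x _x; apply: mule_ge0; first by rewrite lee_fin mulr_ge0.
  by apply: sume_ge0 => i _; exact: ind0.
- apply: measurable_funeM.
  by apply: emeasurable_sum => i; exact: mind.
- apply: emeasurable_funD; first exact: mind mU.
  apply: measurable_funeM.
  by apply: emeasurable_sum => i; apply: emeasurable_sum => j; exact: mind.
move=> x _.
rewrite sumEFin.
rewrite [X in (_ + _ * X)%E](eq_bigr (fun i => (\sum_(j < n) (\1_(A i `&` A j) x : R))%:E)); last by move=> i _; rewrite sumEFin.
rewrite !sumEFin -!EFinM -EFinD lee_fin.
have -> : \sum_(i < n) \sum_(j < n) (\1_(A i `&` A j) x : R) =
          (\sum_(i < n) (\1_(A i) x : R)) ^+ 2.
  rewrite expr2 mulr_suml; apply: eq_bigr => i _; rewrite mulr_sumr.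
  by apply: eq_bigr => j _; rewrite indicI.
set N := \sum_(i < n) _.
have [[i Ai]|nU] := pselect (U x).
  rewrite indicE mem_set; last by exists i.
  have : 0 <= (1 - a * N) ^+ 2 by exact: sqr_ge0.
  by rewrite /= => h; nra.
have -> : N = 0.
  rewrite /N big1 // => j _; rewrite indicE memNset // => Aj; apply: nU; by exists j.
by rewrite indicE memNset // mulr0 expr0n /= mulr0 addr0.
Qed.

End unions.


Lemma key (R : realType)
  (dT : measure_display) (T : measurableType dT) (P : probability T R)
  (dT' : measure_display) (T' : measurableType dT') (P' : probability T' R)
  n (A : 'I_n -> set T) (B : 'I_n -> set T')
  (mA : forall i, measurable (A i)) (mB : forall i, measurable (B i))
  (hAB : forall i, P (A i) = P' (B i))
  (neg : forall i j, i != j -> (P (A i `&` A j) <= P (A i) * P (A j))%E) :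
  ((2^-1)%:E * P' [set x | exists i, B i x] <= P [set x | exists i, A i x])%E.
Proof.
have fin (dd : measure_display) (TT : measurableType dd) (PP : probability TT R) (C : set TT) :
    measurable C -> PP C = (fine (PP C))%:E.
  by move=> mC; rewrite fineK // fin_num_measure.
have mUA := mU mA.
have mUB := mU mB.
have mAA i j : measurable (A i `&` A j) by exact: measurableI.
set p := fun i => fine (P (A i)).
set q := fun i j => fine (P (A i `&` A j)).
set u := fine (P [set x | exists i, A i x]).
set v := fine (P' [set x | exists i, B i x]).
set s := \sum_(i < n) p i.
set Q := \sum_(i < n) \sum_(j < n) q i j.
have p0 i : 0 <= p i by rewrite /p fine_ge0.
have s0 : 0 <= s by apply: sumr_ge0.
have u0 : 0 <= u by rewrite /u fine_ge0.
have vs : v <= s.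
  have := union_le P' mB.
  rewrite (fin _ _ _ _ mUB) (eq_bigr (fun i => (p i)%:E)); last by move=> i _; rewrite -hAB (fin _ _ _ _ (mA i)).
  by rewrite sumEFin lee_fin.
have v1 : v <= 1.
  have := @probability_le1 _ _ _ P' [set x | exists i, B i x] (mU mB).
  by rewrite (fin _ _ _ _ mUB) lee_fin.
have hQ : Q <= s + s * s.
  rewrite /Q /s mulr_suml -big_split /=; apply: ler_sum => i _.
  rewrite (bigD1 i) //= mulr_sumr [X in _ <= _ + X](bigD1 i) //= addrA.
  apply: lerD.
    by rewrite /q setIid ler_wpDr // mulr_ge0.
  apply: ler_sum => j ji.
  have := neg i j; rewrite eq_sym ji => /(_ isT).
  by rewrite (fin _ _ _ _ (mAA i j)) (fin _ _ _ _ (mA i)) (fin _ _ _ _ (mA j)) -EFinM lee_fin.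
set a := (1 + s)^-1.
have a0 : 0 <= a by rewrite /a invr_ge0; lra.
have ha : a * (1 + s) = 1 by rewrite /a mulVf //; apply: lt0r_neq0; lra.
have H := union_ge P mA a0.
rewrite (fin _ _ _ _ mUA) (eq_bigr (fun i => (p i)%:E)) in H; last by move=> i _; rewrite (fin _ _ _ _ (mA i)).
rewrite sumEFin [X in (_ + _ * X)%E](eq_bigr (fun i => (\sum_(j < n) q i j)%:E)) in H; last first.
  move=> i _; rewrite (eq_bigr (fun j => (q i j)%:E)) ?sumEFin //.
  by move=> j _; rewrite (fin _ _ _ _ (mAA i j)).
rewrite !sumEFin -!EFinM -EFinD lee_fin -/s -/Q in H.
rewrite (fin _ _ _ _ mUB) (fin _ _ _ _ mUA) -EFinM lee_fin -/v -/u.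
have H' : 2 * (a * s) <= u + a ^+ 2 * Q by rewrite mulrA; exact: H.
have hbs : a * s <= u.
  have h1 : a ^+ 2 * Q <= a ^+ 2 * (s + s * s) by apply: ler_wpM2l; [exact: exprn_ge0|].
  have h2 : a ^+ 2 * (s + s * s) = a * s * (a * (1 + s)) by rewrite expr2; ring.
  rewrite ha mulr1 in h2.
  lra.
have hs : a * s + a * s * s = s.
  by rewrite -[RHS]mul1r -ha; ring.
have [s1|s1] := leP s 1.
  have h3 : 0 <= s * (1 - s) * a by apply: mulr_ge0 => //; apply: mulr_ge0; lra.
  have e : s * (1 - s) * a = a * s - a * s * s by ring.
  lra.
have h4 : a <= 2^-1.
  have : a * 2 <= a * (1 + s) by apply: ler_wpM2l => //; lra.
  lra.
have e : a * s = 1 - a by rewrite -ha; ring.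
lra.
Qed.


Lemma lt_bigmax0 (R : realType) n (F : 'I_n -> R) t : 0 <= t ->
  (t < \big[Num.max/0]_(i < n) F i) <-> exists i, t < F i.
Proof.
move=> t0; elim: n F => [|n IH] F.
  rewrite big_ord0; split; [by rewrite ltNge t0 | by case=> -[]].
rewrite big_ord_recl /= lt_max; split.
  case/orP => [h|/IH [i hi]]; first by exists ord0.
  by exists (lift ord0 i).
case=> i hi; apply/orP.
have [e|ne] := eqVneq i ord0; first by left; rewrite -e.
right; apply/IH.
rewrite eq_sym in ne; have [j ij _] := unlift_some ne.
by exists j; rewrite -ij.
Qed.

Lemma bigmax0_ge0 (R : realType) n (F : 'I_n -> R) : 0 <= \big[Num.max/0]_(i < n) F i.
Proof.
elim: n F => [|n IH] F; first by rewrite big_ord0.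
by rewrite big_ord_recl le_max IH orbT.
Qed.

Lemma measurable_bigmax (R : realType) (dT : measure_display) (T : measurableType dT)
  n (F : 'I_n -> T -> R) : (forall i, measurable_fun [set: T] (F i)) ->
  measurable_fun [set: T] (fun x => \big[Num.max/0]_(i < n) F i x).
Proof.
elim: n F => [|n IH] F mF.
  by under eq_fun do rewrite big_ord0; exact: measurable_cst.
have -> : (fun x => \big[Num.max/0]_(i < n.+1) F i x) =
   F ord0 \max (fun x => \big[Num.max/0]_(i < n) F (lift ord0 i) x).
  by apply/funext => x; rewrite big_ord_recl.
by apply: measurable_maxr => //; apply: IH.
Qed.

Unset Implicit Arguments.
Theorem corollary13 (R : realType)
  (dT : measure_display) (T : measurableType dT) (P : probability T R)
  (dT' : measure_display) (T' : measurableType dT') (P' : probability T' R)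
  (d : nat) (hd : (1 <= d)%N)
  (X : 'I_d -> {RV P >-> R}) (Xt : 'I_d -> {RV P' >-> R})
  (X_ge0 : forall i x, 0 <= X i x)
  (X_int : forall i, P.-integrable setT (EFin \o X i))
  (negcorr : forall i j : 'I_d, i != j -> forall t : R, 0 < t ->
     (P ([set x | (t < X i x)%R] `&` [set x | (t < X j x)%R])
      <= P [set x | (t < X i x)%R] * P [set x | (t < X j x)%R])%E)
  (Xt_indep : mutually_independent P' (fun i => (Xt i : T' -> R)))
  (Xt_law : forall i (B : set R), measurable B ->
     distribution P (X i) B = distribution P' (Xt i) B) :
  ((2^-1)%:E * 'E_P'[maxRV (fun i => (Xt i : T' -> R))]
   <= 'E_P[maxRV (fun i => (X i : T -> R))])%E.
Proof.
have mX : measurable_fun [set: T] (maxRV (fun i => (X i : T -> R))).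
  by apply: measurable_bigmax => i; exact: measurable_funPT.
have mXt : measurable_fun [set: T'] (maxRV (fun i => (Xt i : T' -> R))).
  by apply: measurable_bigmax => i; exact: measurable_funPT.
pose MX : {RV P >-> R} := mfun_Sub (mem_set mX).
pose MXt : {RV P' >-> R} := mfun_Sub (mem_set mXt).
have -> : ('E_P[maxRV (fun i => (X i : T -> R))] = 'E_P[MX])%E by [].
have -> : ('E_P'[maxRV (fun i => (Xt i : T' -> R))] = 'E_P'[MXt])%E by [].
rewrite !ge0_expectation_ccdf; last 2 first.
- by move=> x; exact: bigmax0_ge0.
- by move=> x; exact: bigmax0_ge0.
have mD : measurable (`[0%R, +oo[%classic : set R) by [].
have mD0 : measurable (`[0%R, +oo[%classic `\ (0:R)) by apply: measurableD.
have mc (Y : {RV P >-> R}) D : measurable_fun D (ccdf Y).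
  by apply: measurable_funS (ccdf_measurable Y).
have mc' (Y : {RV P' >-> R}) D : measurable_fun D (ccdf Y).
  by apply: measurable_funS (ccdf_measurable Y).
rewrite -ge0_integralZl_EFin //; try solve [ move=> x _; exact: measure_ge0 | rewrite invr_ge0 // | exact: mc' ].
rewrite -(@integral_setD1 _ _ 0) //; try solve [exact: measurable_funeM].
rewrite -[leRHS](@integral_setD1 _ _ 0) //.
apply: ge0_le_integral => //.
- move=> x _; apply: mule_ge0; last exact: measure_ge0.
  by rewrite lee_fin invr_ge0.
- apply: measurable_funeM.
  exact: measurable_funS (ccdf_measurable MXt).
- exact: measurable_funS (ccdf_measurable MX).
move=> t [/=]; rewrite in_itv /= andbT => t0 tn0.
have {t0 tn0} t0 : 0 < t by rewrite lt_neqAle t0 andbT eq_sym; apply/eqP.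
have pre (dd : measure_display) (TT : measurableType dd) (PP : probability TT R) (Y : {RV PP >-> R}) :
    [set x | t < Y x] = Y @^-1` `]t, +oo[.
  by apply/seteqP; split => x /=; rewrite in_itv /= andbT.
have mpre (dd : measure_display) (TT : measurableType dd) (PP : probability TT R) (Y : {RV PP >-> R}) :
    measurable [set x | t < Y x].
  by rewrite pre; exact: measurable_funPTI.
have eqM (dd : measure_display) (TT : measurableType dd) (PP : probability TT R)
    (Y : 'I_d -> {RV PP >-> R}) (mY : measurable_fun [set: TT] (maxRV (fun i => (Y i : TT -> R)))) :
    (@mfun_Sub _ _ TT R _ (mem_set mY)) @^-1` `]t, +oo[ = [set x | exists i, [set x | t < Y i x] x].
  apply/seteqP; split => x /=; rewrite in_itv /= andbT.
    by move/(lt_bigmax0 _ (ltW t0)).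
  by move=> h; apply/(lt_bigmax0 _ (ltW t0)).
rewrite /ccdf /distribution /pushforward /= /MX /MXt !eqM.
apply: key.
- by move=> i; exact: (mpre _ _ P (X i)).
- by move=> i; exact: (mpre _ _ P' (Xt i)).
- move=> i; have := Xt_law i `]t, +oo[%classic (measurable_itv _).
  by rewrite /distribution /pushforward -(pre _ _ P (X i)) -(pre _ _ P' (Xt i)).
- by move=> i j ij; exact: negcorr.
- exact: mX.
- exact: mXt.
Qed.
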